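(* Let $p>q\geq 2$ be relatively prime integers with $p\geq 2q-1$, and let $k>0$ be an integer. Then there exists a finite union of intervals $I\subseteq[0,1)$ of total length at most $(q/p)^k$ such that $Z_{p/q}(I)\neq\emptyset$.
   Context: For $x\in\mathbb{R}$, $\{x\}=x-\lfloor x\rfloor$ denotes the fractional part. For relatively prime integers $p>q>1$ and $S\subseteq[0,1)$, $Z_{p/q}(S)=\{\xi>0 \mid \{\xi (p/q)^i\}\in S \text{ for every } i\in\mathbb{N}\}$, where $\mathbb{N}=\{0,1,2,\dots\}$. *)

(* Defs.v *)
From HB Require Import structures.
From mathcomp Require Import all_boot all_order all_algebra.
From mathcomp Require Import all_classical all_reals all_analysis.
Set Implicit Arguments. Unset Strict Implicit. Unset Printing Implicit Defensive.
Import Order.TTheory GRing.Theory Num.Theory.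
Local Open Scope classical_set_scope.
Local Open Scope ring_scope.

Definition frac {R : realType} (x : R) : R := x - (Num.floor x)%:~R.

Definition Zset {R : realType} (r : R) (S : set R) : set R :=
  [set xi | 0 < xi /\ forall i : nat, S (frac (xi * r ^+ i))].

Definition union_itv {R : realType} (s : seq (interval R)) : set R :=
  \big[setU/set0]_(j <- s) [set` j].

(* Main.v *)
Require Import Defs.
From HB Require Import structures.
From mathcomp Require Import all_boot all_order all_algebra.
From mathcomp Require Import all_classical all_reals all_analysis.
From mathcomp Require Import ring lra zify.
Import Order.TTheory GRing.Theory Num.Theory.
Local Open Scope classical_set_scope.
Local Open Scope ring_scope.
Local Open Scope nat_scope.
Definition Gc (p q n : nat) : nat := ((p * n + q.-1) %/ q)%N.

Lemma Gc_shift p q n t : (0 < q)%N -> Gc p q (n + q * t) = (Gc p q n + p * t)%N.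
Proof.
move=> q0; rewrite /Gc.
have -> : (p * (n + q * t) + q.-1 = (p*n + q.-1) + (p*t)*q)%N by lia.
by rewrite divnDMl.
Qed.

Lemma iterGc_shift p q k n t : (0 < q)%N ->
  iter k (Gc p q) (n + q ^ k * t) = (iter k (Gc p q) n + p ^ k * t)%N.
Proof.
move=> q0; elim: k n t => [|k IH] n t /=; first by rewrite !expn0 !mul1n.
have -> : (q ^ k.+1 * t = q ^ k * (q * t))%N by rewrite expnS mulnCA mulnA.
by rewrite IH mulnCA Gc_shift // expnS mulnA.
Qed.

Lemma iterGc_mod p q k n : (0 < q)%N ->
  (iter k (Gc p q) n %% p ^ k = iter k (Gc p q) (n %% q ^ k) %% p ^ k)%N.
Proof.
move=> q0; rewrite {1}(divn_eq n (q ^ k)) addnC mulnC iterGc_shift //.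
by rewrite mulnC addnC modnMDl.
Qed.

Lemma Gc_lb p q n : (0 < q)%N -> (p * n <= q * Gc p q n)%N.
Proof.
move=> q0; rewrite /Gc.
have := ltn_ceil (p * n + q.-1) q0. rewrite mulnC mulSn. lia.
Qed.

Lemma Gc_ub p q n : (0 < q)%N -> (q * Gc p q n <= p * n + q.-1)%N.
Proof. by move=> q0; rewrite /Gc mulnC leq_trunc_div. Qed.

Local Open Scope ring_scope.
Lemma seq_limit (R : realType) (r : R) (a : nat -> R) :
  0 < r -> (forall j, r * a j <= a j.+1) ->
  (forall j, a j.+1 + 1 <= r * (a j + 1)) ->
  exists xi : R, forall j, a j <= xi * r ^+ j <= a j + 1.
Proof.
move=> r0 Hlo Hup.
pose u j := a j / r ^+ j.
have rj0 j : 0 < r ^+ j by apply: exprn_gt0.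
have umono j m : u j <= u (j + m)%N.
  elim: m => [|m IH]; first by rewrite addn0.
  apply: (le_trans IH); rewrite /u addnS exprS ler_pdivlMr ?mulr_gt0 //.
  have -> : a (j + m)%N / r ^+ (j + m) * (r * r ^+ (j + m)) = r * a (j + m)%N.
    by field; rewrite gt_eqF.
  exact: Hlo.
have abnd j m : a (j + m)%N + 1 <= r ^+ m * (a j + 1).
  elim: m => [|m IH]; first by rewrite addn0 expr0 mul1r.
  rewrite addnS; apply: (le_trans (Hup _)).
  by rewrite exprS -mulrA ler_pM2l.
have ubnd j m : u (j + m)%N <= (a j + 1) / r ^+ j.
  rewrite /u ler_pdivrMr // exprD.
  have -> : (a j + 1) / r ^+ j * (r ^+ j * r ^+ m) = r ^+ m * (a j + 1).
    by field; rewrite gt_eqF.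
  apply: le_trans (abnd j m); lra.
pose E := range u.
have E0 : E !=set0 by exists (u 0%N), 0%N.
have Eub j : ubound E ((a j + 1) / r ^+ j).
  move=> _ [m _ <-].
  case: (leqP j m) => hjm.
    by rewrite -(subnKC hjm); apply: ubnd.
  apply: (le_trans (umono m (j - m)%N)).
  by rewrite subnKC ?(ltnW hjm) //; have := ubnd j 0; rewrite addn0.
have hs : has_sup E by split => //; exists ((a 0%N + 1) / r ^+ 0).
exists (sup E) => j; apply/andP; split.
  rewrite -ler_pdivrMr //; exact: sup_upper_bound hs _ (ex_intro2 _ _ j I erefl).
rewrite -ler_pdivlMr //; exact: ge_sup E0 (Eub j).
Qed.
Lemma union_itvP (R : realType) (s : seq (interval R)) x :
  union_itv s x <-> exists2 j, j \in s & [set` j] x.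
Proof.
elim: s => [|j s IH]; rewrite /union_itv ?big_nil ?big_cons.
  by split => // -[].
split.
  case => [hx|/IH [i hi hx]]; first by exists j; rewrite ?mem_head.
  by exists i; rewrite // in_cons hi orbT.
move=> [i]; rewrite in_cons => /orP [/eqP ->|hi] hx; first by left.
by right; apply/IH; exists i.
Qed.

Lemma union_itv_meas (R : realType) (s : seq (interval R)) :
  measurable (union_itv s).
Proof.
elim: s => [|j s IH]; rewrite /union_itv ?big_nil ?big_cons //.
exact: measurableU.
Qed.

Lemma union_itv_le (R : realType) (s : seq (interval R)) :
  (lebesgue_measure (union_itv s) <=
     \sum_(j <- s) lebesgue_measure [set` j])%E.
Proof.
elim: s => [|j s IH]; rewrite /union_itv ?big_nil ?big_cons.
  by rewrite measure0.
apply: (le_trans (measureU2 _ _ _)) => //; first exact: union_itv_meas.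
by apply: leeD.
Qed.
Lemma frac_natD (R : realType) (m : nat) (t : R) :
  0 <= t < 1 -> Defs.frac (m%:R + t) = t.
Proof.
move=> /andP [t0 t1]; rewrite /Defs.frac.
have -> : Num.floor (m%:R + t) = m%:Z.
  apply: floor_def; rewrite -[(m%:Z)%:~R]/(m%:R) (_ : (m%:Z + 1)%:~R = m%:R + 1).
    apply/andP; split; lra.
  by rewrite rmorphD /= rmorph1.
rewrite -[(m%:Z)%:~R]/(m%:R); lra.
Qed.

Lemma split_div (R : realType) (a b m X : R) :
  m != 0 -> X / m = a + (b + (X - (a * m + b))) / m.
Proof. by move=> m0; field. Qed.

Theorem theorem2 (R : realType) (p q k : nat) :
  (2 <= q)%N -> (q < p)%N -> coprime p q -> (2 * q - 1 <= p)%N -> (0 < k)%N ->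
  exists s : seq (interval R),
    union_itv s `<=` `[0, 1[%classic /\
    (lebesgue_measure (union_itv s) <= ((q%:R / p%:R) ^+ k)%:E)%E /\
    Zset (p%:R / q%:R) (union_itv s) !=set0.
Proof.
move=> hq hqp _ hp _.
have q0 : (0 < q)%N by apply: leq_trans hq.
have p0 : (0 < p)%N by apply: leq_trans hqp.
set M := (p ^ k)%N.
have M0 : (0 < M)%N by rewrite expn_gt0 p0.
have M0r : (0 : R) < M%:R by rewrite ltr0n.
set r : R := p%:R / q%:R.
have r0 : 0 < r by rewrite divr_gt0 // ltr0n.
pose Nf j := iter j (Gc p q) 1%N.
have Hlo j : r * (Nf j)%:R <= (Nf j.+1)%:R.
  rewrite /r mulrAC ler_pdivrMr ?ltr0n // -!natrM ler_nat mulnC.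
  by rewrite /Nf /= mulnC (mulnC _ q); apply: Gc_lb.
have Hup j : (Nf j.+1)%:R + 1 <= r * ((Nf j)%:R + 1).
  rewrite /r mulrAC ler_pdivlMr ?ltr0n // !natr1 -!natrM ler_nat.
  have := Gc_ub p q (Nf j) q0; rewrite /Nf /=; lia.
have [xi Hxi] := @seq_limit R r (fun j => (Nf j)%:R) r0 Hlo Hup.
pose S := [seq (iter k (Gc p q) j %% M)%N | j <- iota 0 (q ^ k)].
have SM R0 : R0 \in S -> (R0 < M)%N.
  by move=> /mapP [j _ ->]; rewrite ltn_pmod.
pose s1 : seq (interval R) := [seq `[(R0%:R / M%:R), (R0.+1%:R / M%:R)[ | R0 <- S].
pose s2 : seq (interval R) := [seq `[(R0.+1 %% M)%:R / M%:R, (R0.+1 %% M)%:R / M%:R] | R0 <- S].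
exists (s1 ++ s2); split; [|split].
- move=> x /union_itvP [j]; rewrite mem_cat => /orP [] /mapP [R0 hR ->] /=;
    rewrite /= !in_itv /= => /andP [h1 h2]; apply/andP; split.
  + by apply: le_trans h1; rewrite divr_ge0 // ler0n.
  + apply: (lt_le_trans h2); rewrite ler_pdivrMr // mul1r ler_nat; exact: SM.
  + by apply: le_trans h1; rewrite divr_ge0 // ler0n.
  + apply: (le_lt_trans h2); rewrite ltr_pdivrMr // mul1r ltr_nat ltn_pmod //.
- apply: le_trans (@union_itv_le R _) _; rewrite big_cat /= !big_map.
  rewrite [X in (_ + X)%E]big1 ?adde0; last first.
    by move=> R0 _; rewrite lebesgue_measure_itv /= lte_fin ltxx.
  rewrite (eq_bigr (fun _ : nat => (M%:R^-1 : R)%:E)); last first.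
    move=> R0 _; rewrite lebesgue_measure_itv /= lte_fin.
    rewrite ltr_pM2r ?invr_gt0 // ltr_nat ltnSn -EFinD; congr (_%:E).
    by rewrite -mulrBl -natrB // subSnn mul1r.
  have -> : iota 0 (q ^ k) = index_iota 0 (q ^ k) by rewrite /index_iota subn0.
  rewrite sumEFin sumr_const_nat subn0 lee_fin expr_div_n -!natrX -/M.
  by rewrite -[X in X <= _]mulr_natl mulrC.
- have xi0 : 0 < xi.
    have /andP [h _] := Hxi 0%N; move: h; rewrite expr0 mulr1 /Nf /=.
    by apply: lt_le_trans; rewrite ltr01.
  pose y := xi * r ^+ k / M%:R.
  exists y; split.
    by rewrite /y divr_gt0 // mulr_gt0 // exprn_gt0.
  move=> i.
  have -> : y * r ^+ i = (xi * r ^+ (k + i)) / M%:R by rewrite /y exprD !mulrA [RHS]mulrAC.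
  set n := Nf (k + i)%N.
  have Hn : n = iter k (Gc p q) (Nf i) by rewrite /n /Nf iterD.
  have RS : (n %% M)%N \in S.
    rewrite Hn iterGc_mod //; apply: map_f.
    by rewrite mem_iota add0n ltn_pmod // expn_gt0 q0.
  have /andP [h1 h2] := Hxi (k + i)%N.
  rewrite -/n in h1 h2.
  set X := xi * r ^+ (k + i) in h1 h2 *.
  have nE : n%:R = (n %/ M)%:R * M%:R + (n %% M)%:R :> R.
    by rewrite -natrM -natrD -divn_eq.
  apply/union_itvP; case: (ltP X (n%:R + 1)) => hX.
    exists `[(n %% M)%:R / M%:R, (n %% M).+1%:R / M%:R[.
      by rewrite mem_cat; apply/orP; left; apply/mapP; exists (n %% M)%N.
    have -> : X / M%:R = (n %/ M)%:R + ((n %% M)%:R + (X - n%:R)) / M%:R.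
      by rewrite nE; apply: split_div; rewrite gt_eqF.
    have hM : (n %% M).+1%:R <= M%:R :> R by rewrite ler_nat ltn_pmod.
    rewrite frac_natD; last first.
      apply/andP; split; first by rewrite divr_ge0 ?ler0n // addr_ge0 ?ler0n // subr_ge0.
      rewrite ltr_pdivrMr // mul1r; apply: lt_le_trans hM; by rewrite -natr1 ltrD2l ltrBlDl.
    rewrite /= in_itv /=; apply/andP; split.
      by rewrite ler_pM2r ?invr_gt0 // lerDl subr_ge0.
    by rewrite ltr_pM2r ?invr_gt0 // -natr1 ltrD2l ltrBlDl.
  have XE : X = n.+1%:R by rewrite -natr1; apply/eqP; rewrite eq_le h2 hX.
  exists `[((n %% M).+1 %% M)%:R / M%:R, ((n %% M).+1 %% M)%:R / M%:R].
    by rewrite mem_cat; apply/orP; right; apply/mapP; exists (n %% M)%N.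
  have Em : ((n %% M).+1 %% M = n.+1 %% M)%N by rewrite -[(n %% M).+1]addn1 -[n.+1]addn1 modnDml.
  rewrite Em.
  have -> : X / M%:R = (n.+1 %/ M)%:R + (n.+1 %% M)%:R / M%:R.
    by rewrite XE {1}(divn_eq n.+1 M) natrD natrM mulrDl mulfK // gt_eqF.
  rewrite frac_natD; last first.
    apply/andP; split; first by rewrite divr_ge0 ?ler0n.
    by rewrite ltr_pdivrMr // mul1r ltr_nat ltn_pmod.
  by rewrite /= in_itv /= lexx.
Qed.
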